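(* Let $T:\mathcal{S}_n\to\mathcal{S}_n$ be a bijective isometry with respect to the Hausdorff distance, and let $(K_0,K_1)$ be an $\mathcal{S}_n$-cute pair. Then $(TK_0,TK_1)$ is an $\mathcal{S}_n$-cute pair, and moreover $T\left(\tfrac12 K_0+\tfrac12 K_1\right)=\tfrac12\left(T(K_0)+T(K_1)\right)$.
   Context: Convex bodies are compact convex non-empty subsets of $\mathbb{R}^n$; $B_2^n$ is the closed Euclidean unit ball; $\delta$ is the Hausdorff distance $\delta(K_0,K_1)=\inf\{\lambda>0: K_0\subseteq K_1+\lambda B_2^n,\ K_1\subseteq K_0+\lambda B_2^n\}$. $\mathcal{S}_n$ is the set of convex bodies in $\mathbb{R}^n$ which are intersections of Euclidean unit balls. A pair $(K_0,K_1)\in\mathcal{S}_n\times\mathcal{S}_n$ is called $\mathcal{S}_n$-cute if $M=\frac{K_0+K_1}{2}$ (Minkowski average, which lies in $\mathcal{S}_n$) is the unique body in $\mathcal{S}_n$ satisfying $\delta(K_0,M)=\frac12\delta(K_0,K_1)$ and $\delta(K_1,M)=\frac12\delta(K_0,K_1)$. *)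

(* Defs.v *)
From HB Require Import structures.
From mathcomp Require Import all_boot all_order all_algebra.
From mathcomp Require Import all_classical all_reals all_analysis.
Set Implicit Arguments. Unset Strict Implicit. Unset Printing Implicit Defensive.
Import Order.TTheory GRing.Theory Num.Theory.
Import numFieldTopology.Exports numFieldNormedType.Exports.
Local Open Scope classical_set_scope.
Local Open Scope ring_scope.

Section Defs.
Variables (R : realType) (n : nat).
Notation V := 'rV[R]_n.

Definition enorm (x : V) : R := Num.sqrt (\sum_(i < n) (x ord0 i) ^+ 2).

Definition eball (c : V) (r : R) : set V := [set x | enorm (x - c) <= r].

Definition is_convex (K : set V) : Prop :=
  forall x y t, K x -> K y -> 0 <= t <= 1 -> K ((1 - t) *: x + t *: y).

Definition convex_body (K : set V) : Prop :=
  compact K /\ is_convex K /\ K !=set0.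

Definition msum (A B : set V) : set V := [set a + b | a in A & b in B].
Definition mscale (t : R) (A : set V) : set V := [set t *: a | a in A].

Definition hdist (K0 K1 : set V) : R :=
  inf [set l : R | 0 < l /\ K0 `<=` msum K1 (eball 0 l) /\ K1 `<=` msum K0 (eball 0 l)].

Definition Sn (K : set V) : Prop :=
  convex_body K /\ exists C : set V, K = [set x | forall c, C c -> eball c 1 x].

Definition mavg (K0 K1 : set V) : set V := mscale (2^-1) (msum K0 K1).

Definition Sn_cute (K0 K1 : set V) : Prop :=
  Sn K0 /\ Sn K1 /\
  let M := mavg K0 K1 in
  let d := hdist K0 K1 in
  Sn M /\ hdist K0 M = d / 2 /\ hdist K1 M = d / 2 /\
  (forall M', Sn M' -> hdist K0 M' = d / 2 -> hdist K1 M' = d / 2 -> M' = M).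

Definition Sn_bij_isometry (T : set V -> set V) : Prop :=
  (forall K, Sn K -> Sn (T K)) /\
  (forall K L, Sn K -> Sn L -> T K = T L -> K = L) /\
  (forall L, Sn L -> exists K, Sn K /\ T K = L) /\
  (forall K L, Sn K -> Sn L -> hdist (T K) (T L) = hdist K L).
End Defs.

(* Main.v *)
From HB Require Import structures.
From mathcomp Require Import all_boot all_order all_algebra.
From mathcomp Require Import all_classical all_reals all_analysis.
From mathcomp Require Import ring lra.
Require Import Defs.
Set Implicit Arguments. Unset Strict Implicit. Unset Printing Implicit Defensive.
Import Order.TTheory GRing.Theory Num.Theory.
Import numFieldTopology.Exports numFieldNormedType.Exports.
Local Open Scope classical_set_scope.
Local Open Scope ring_scope.

Ltac vec := apply/rowP => ?; rewrite !mxE; ring.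

Section Vec.
Variables (R : realType) (n : nat).
Notation V := 'rV[R]_n.

Definition dot (x y : V) : R := \sum_(i < n) x ord0 i * y ord0 i.
Definition sq (x : V) : R := dot x x.

Lemma dotC x y : dot x y = dot y x.
Proof. by apply: eq_bigr => i _; rewrite mulrC. Qed.

Lemma dotDl x y z : dot (x + y) z = dot x z + dot y z.
Proof. by rewrite /dot -big_split; apply: eq_bigr => i _; rewrite mxE mulrDl. Qed.

Lemma dotDr x y z : dot z (x + y) = dot z x + dot z y.
Proof. by rewrite dotC dotDl !(dotC z). Qed.

Lemma dotZl a x y : dot (a *: x) y = a * dot x y.
Proof. by rewrite /dot mulr_sumr; apply: eq_bigr => i _; rewrite mxE mulrA. Qed.

Lemma dotZr a x y : dot y (a *: x) = a * dot y x.
Proof. by rewrite dotC dotZl dotC. Qed.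

Lemma dotNl x y : dot (- x) y = - dot x y.
Proof. by rewrite -scaleN1r dotZl mulN1r. Qed.

Lemma dotNr x y : dot y (- x) = - dot y x.
Proof. by rewrite dotC dotNl dotC. Qed.

Lemma dotBl x y z : dot (x - y) z = dot x z - dot y z.
Proof. by rewrite dotDl dotNl. Qed.

Lemma dotBr x y z : dot z (x - y) = dot z x - dot z y.
Proof. by rewrite dotDr dotNr. Qed.

Lemma sq_ge0 x : 0 <= sq x.
Proof. by apply: sumr_ge0 => i _; rewrite -expr2 sqr_ge0. Qed.

Lemma sq_eq0 x : sq x = 0 -> x = 0.
Proof.
move=> /eqP; rewrite psumr_eq0; last by move=> i _; rewrite -expr2 sqr_ge0.
move=> /allP H; apply/matrixP => i j; rewrite (ord1 i) mxE.
by have := H j (mem_index_enum j); rewrite -expr2 sqrf_eq0 => /implyP /(_ isT) /eqP.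
Qed.

Lemma sqD x y : sq (x + y) = sq x + 2 * dot x y + sq y.
Proof. rewrite /sq !dotDl !dotDr (dotC y x); ring. Qed.

Lemma sqB x y : sq (x - y) = sq x - 2 * dot x y + sq y.
Proof. rewrite /sq !dotBl !dotBr (dotC y x); ring. Qed.

Lemma sqZ a x : sq (a *: x) = a ^+ 2 * sq x.
Proof. rewrite /sq dotZl dotZr; ring. Qed.

Lemma enormE (x : V) : enorm x = Num.sqrt (sq x).
Proof. by rewrite /enorm /sq /dot; congr Num.sqrt; apply: eq_bigr => i _; rewrite expr2. Qed.

Lemma enorm_ge0 (x : V) : 0 <= enorm x.
Proof. by rewrite enormE sqrtr_ge0. Qed.

Lemma enorm_sq (x : V) : enorm x ^+ 2 = sq x.
Proof. by rewrite enormE sqr_sqrtr // sq_ge0. Qed.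

Lemma cauchy_schwarz x y : dot x y ^+ 2 <= sq x * sq y.
Proof.
have [y0|yn0] := eqVneq (sq y) 0.
  have -> : y = 0 by exact: sq_eq0.
  have d0 : dot x 0 = 0 by rewrite /dot big1 // => i _; rewrite mxE mulr0.
  by rewrite d0 expr2 mul0r mulr_ge0 ?sq_ge0.
have ypos : 0 < sq y by rewrite lt_def yn0 sq_ge0.
have := sq_ge0 (sq y *: x - dot x y *: y).
rewrite sqB sqZ sqZ dotZl dotZr => H.
move: H ypos; set a := sq x; set b := sq y; set c := dot x y => H ypos.
have H2 : 0 <= b * (a * b - c ^+ 2) by move: H; rewrite -!/(sq _); nra.
rewrite -subr_ge0; move: H2; rewrite pmulr_rge0 //.
Qed.

Lemma enorm_le (x : V) r : 0 <= r -> (enorm x <= r) = (sq x <= r ^+ 2).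
Proof. by move=> r0; rewrite enormE -(@ler_sqrt _ (sq x) (r ^+ 2)) ?exprn_ge0 // sqrtr_sqr ger0_norm. Qed.

Lemma cs_norm (x y : V) : dot x y <= enorm x * enorm y.
Proof.
have := cauchy_schwarz x y; rewrite -!enorm_sq.
have := enorm_ge0 x; have := enorm_ge0 y.
set a := enorm x; set b := enorm y; set c := dot x y => b0 a0 H.
have ab0 : 0 <= a * b by rewrite mulr_ge0.
rewrite -exprMn in H; nra.
Qed.

Lemma enormD (x y : V) : enorm (x + y) <= enorm x + enorm y.
Proof.
rewrite enorm_le ?addr_ge0 ?enorm_ge0 // sqD -!enorm_sq.
have := cs_norm x y; nra.
Qed.

Lemma enormZ a (x : V) : enorm (a *: x) = `|a| * enorm x.
Proof. by rewrite !enormE sqZ sqrtrM ?sqr_ge0 // sqrtr_sqr. Qed.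

Lemma enormN (x : V) : enorm (- x) = enorm x.
Proof. by rewrite -scaleN1r enormZ normrN normr1 mul1r. Qed.

Lemma enormB (x y : V) : enorm (x - y) = enorm (y - x).
Proof. by rewrite -enormN opprB. Qed.

Lemma eballE c r (x : V) : 0 <= r -> eball c r x <-> sq (x - c) <= r ^+ 2.
Proof. by move=> r0; rewrite /eball /= enorm_le. Qed.

Lemma slide (K C : set V) :
  K = [set x | forall c, C c -> eball c 1 x] ->
  forall a u y, K a -> K y -> sq u = 1 ->
  (forall k, K k -> dot (k - a) u <= 0) -> sq (y - (a - u)) <= 1.
Proof.
move=> KE a u y Ka Ky u1 Hmax.
rewrite leNgt; apply/negP => Hy.
have vE : y - (a - u) = (y - a) + u by vec.
rewrite vE sqD u1 in Hy.
have hq := Hmax y Ky.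
move: Hy hq.
set v := y - a; set s := sq v; set q := dot v u => Hy hq.
have s0 : 0 <= s by exact: sq_ge0.
have s1 : 0 < 2 * (s + 1) ^+ 2 by rewrite mulr_gt0 // exprn_gt0 // ltr_wpDl.
pose t := (s + 2 * q) / (2 * (s + 1) ^+ 2).
have tE : t * (2 * (s + 1) ^+ 2) = s + 2 * q by rewrite /t mulfVK // gt_eqF.
have t0 : 0 < t by rewrite /t divr_gt0 //; lra.
have t12 : t <= 1/2 by nra.
have ts12 : t * s <= 1/2 by nra.
have key : 0 < q + (1 - t) * s / 2 by nra.
pose rho := (1 - t) * t * s / 2.
pose z := a + t *: v + rho *: u.
have Kz : K z.
  rewrite KE => c Cc.
  have : K a by []; rewrite {1}KE => /(_ c Cc) /eballE -/(_ ler01); rewrite expr1n => Ha.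
  have : K y by []; rewrite {1}KE => /(_ c Cc) /eballE -/(_ ler01); rewrite expr1n => Hyc.
  apply/eballE => //; rewrite expr1n.
  pose g := (a - c) + t *: v.
  have yc : y - c = (a - c) + v by rewrite /v; vec.
  have gE : sq g = (1 - t) * sq (a - c) + t * sq (y - c) - (1 - t) * t * s.
    by rewrite yc /g (sqD (a - c) v) (sqD (a - c) (t *: v)) sqZ dotZr -/s; ring.
  have zc : z - c = g + rho *: u by rewrite /z /g; vec.
  rewrite zc sqD sqZ dotZr u1.
  have := cs_norm g u; rewrite (enormE u) u1 sqrtr1 mulr1 => cs.
  have G0 := enorm_ge0 g; have G2 := enorm_sq g.
  move: cs G0 G2 gE; set G := enorm g; set dg := dot g u => cs G0 G2 gE.
  have rho0 : 0 <= rho by rewrite /rho; nra.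
  have Gsq : G ^+ 2 <= 1 - 2 * rho by rewrite G2 gE /rho; nra.
  have G1 : G <= 1 - rho by nra.
  nra.
have := Hmax z Kz.
have -> : z - a = t *: v + rho *: u by rewrite /z; vec.
rewrite dotDl !dotZl -/(sq u) u1 -/q mulr1 /rho; nra.
Qed.

End Vec.

Ltac vecf := apply/rowP => ?; rewrite !mxE; field.

Section Haus.
Variables (R : realType) (n : nat).
Notation V := 'rV[R]_n.

Definition HS (A B : set V) : set R :=
  [set l : R | 0 < l /\ A `<=` msum B (eball 0 l) /\ B `<=` msum A (eball 0 l)].

Lemma hdistE (A B : set V) : hdist A B = inf (HS A B).
Proof. by []. Qed.

Lemma eball0 (l : R) (x : V) : eball 0 l x <-> enorm x <= l.
Proof. by rewrite /eball /= subr0. Qed.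

Lemma msum_mono (A B B' : set V) : B `<=` B' -> msum A B `<=` msum A B'.
Proof. by move=> BB x [a Aa [b Bb <-]]; exists a => //; exists b => //; apply: BB. Qed.

Lemma HS_up (A B : set V) l l' : HS A B l -> l <= l' -> HS A B l'.
Proof.
move=> [l0 [H1 H2]] ll'.
have sub : eball 0 l `<=` eball (0 : V) l'.
  by move=> x /eball0 h; apply/eball0; exact: le_trans h ll'.
split; first exact: lt_le_trans l0 ll'.
split => x hx; apply: msum_mono sub _ _; [exact: H1 | exact: H2].
Qed.

Lemma HS_sym (A B : set V) : HS A B = HS B A.
Proof. by apply/funext => l; apply/propext; rewrite /HS /=; tauto. Qed.

Lemma hdist_sym (A B : set V) : hdist A B = hdist B A.
Proof. by rewrite !hdistE HS_sym. Qed.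

Lemma HS_lb (A B : set V) : lbound (HS A B) 0.
Proof. by move=> l [l0 _]; exact: ltW. Qed.

Lemma hdist_le (A B : set V) l : HS A B l -> hdist A B <= l.
Proof. by move=> h; apply: ge_inf => //; exists 0; exact: HS_lb. Qed.

Lemma hdist_ge0 (A B : set V) : HS A B !=set0 -> 0 <= hdist A B.
Proof. by move=> ne; apply: lb_le_inf => //; exact: HS_lb. Qed.

Lemma hdist_gt (A B : set V) l : HS A B !=set0 -> hdist A B < l -> HS A B l.
Proof. by move=> ne /(inf_lt ne) [l' h l'l]; apply: HS_up h (ltW l'l). Qed.

Lemma HS_tri (A M B : set V) l1 l2 : HS A M l1 -> HS M B l2 -> HS A B (l1 + l2).
Proof.
move=> [l10 [H1 H1']] [l20 [H2 H2']]; split; first exact: addr_gt0.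
split.
- move=> a /H1 [m Mm [e1 /eball0 e1l <-]].
  have [b Bb [e2 /eball0 e2l <-]] := H2 _ Mm.
  exists b => //; exists (e2 + e1); last by rewrite addrA.
  apply/eball0; apply: le_trans (enormD _ _) _; lra.
- move=> b /H2' [m Mm [e2 /eball0 e2l <-]].
  have [a Aa [e1 /eball0 e1l <-]] := H1' _ Mm.
  exists a => //; exists (e1 + e2); last by rewrite addrA.
  apply/eball0; apply: le_trans (enormD _ _) _; lra.
Qed.

Lemma hdist_tri (A M B : set V) : HS A M !=set0 -> HS M B !=set0 ->
  hdist A B <= hdist A M + hdist M B.
Proof.
move=> ne1 ne2; apply/ler_addgt0Pr => e e0.
have h1 : HS A M (hdist A M + e / 2) by apply: hdist_gt => //; lra.
have h2 : HS M B (hdist M B + e / 2) by apply: hdist_gt => //; lra.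
apply: le_trans (hdist_le (HS_tri h1 h2)) _; lra.
Qed.

Lemma compact_enorm_bound (A : set V) : compact A ->
  exists r, forall x, A x -> enorm x <= r.
Proof.
move=> /compact_bounded [M [Mreal normAltM]].
have hA : forall x, A x -> `|x| <= M + 1.
  by move=> x Ax; apply: (normAltM (M + 1)) => //; rewrite ltrDl.
exists (Num.sqrt (\sum_(i < n) (M + 1) ^+ 2)) => x Ax.
rewrite enormE; apply: ler_wsqrtr; apply: ler_sum => i _.
have hi : `|x ord0 i| <= M + 1.
  apply: le_trans (hA x Ax).
  have /mapP[j Hj ->] : `|x ord0 i| \in [seq `|x k.1 k.2| | k : 'I_1 * 'I_n].
    by apply/mapP; exists (ord0, i) => //=; rewrite mem_enum.
  by rewrite [leRHS]/Num.norm /= mx_normrE; apply/bigmax_geP; right => /=; exists j.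
move: hi; rewrite ler_norml => /andP [h1 h2]; nra.
Qed.

Lemma HS_ne (A B : set V) : convex_body A -> convex_body B -> HS A B !=set0.
Proof.
move=> [cA [_ [a0 Aa0]]] [cB [_ [b0 Bb0]]].
have [rA hA] := compact_enorm_bound cA.
have [rB hB] := compact_enorm_bound cB.
have rA0 : 0 <= rA by apply: le_trans (hA _ Aa0); exact: enorm_ge0.
have rB0 : 0 <= rB by apply: le_trans (hB _ Bb0); exact: enorm_ge0.
exists (rA + rB + 1); split; first lra.
split.
- move=> a Aa; exists b0 => //; exists (a - b0); last by rewrite addrC subrK.
  apply/eball0; apply: le_trans (enormD _ _) _; rewrite enormN.
  have := hA _ Aa; have := hB _ Bb0; lra.
- move=> b Bb; exists a0 => //; exists (b - a0); last by rewrite addrC subrK.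
  apply/eball0; apply: le_trans (enormD _ _) _; rewrite enormN.
  have := hA _ Aa0; have := hB _ Bb; lra.
Qed.

Lemma msumC (A B : set V) : msum A B = msum B A.
Proof.
apply/funext => x; apply/propext; split => -[a Aa [b Bb <-]];
  by exists b => //; exists a => //; rewrite addrC.
Qed.

Lemma mavgC (A B : set V) : mavg A B = mavg B A.
Proof. by rewrite /mavg msumC. Qed.

Lemma HS_mid (A B : set V) l : is_convex A -> HS A B l -> HS A (mavg A B) (l / 2).
Proof.
move=> cvA [l0 [H1 H2]]; split; first lra.
split.
- move=> a Aa; have [b Bb [e /eball0 el be]] := H1 _ Aa.
  exists (2^-1 *: (a + b)).
    by exists (a + b) => //; exists a => //; exists b.
  exists (2^-1 *: e); last by rewrite -be; vecf.
  apply/eball0; rewrite enormZ ger0_norm; lra.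
- move=> x [s [a Aa [b Bb <-]] <-].
  have [a' Aa' [e /eball0 el be]] := H2 _ Bb.
  exists (2^-1 *: (a + a')).
    have -> : 2^-1 *: (a + a') = (1 - 2^-1) *: a + 2^-1 *: a' by vecf.
    by apply: cvA => //; apply/andP; split; lra.
  exists (2^-1 *: e); last by rewrite -be; vecf.
  apply/eball0; rewrite enormZ ger0_norm; lra.
Qed.

End Haus.

Section Mid.
Variables (R : realType) (n : nat).
Notation V := 'rV[R]_n.

Lemma mavg_body (A B : set V) : convex_body A -> convex_body B -> convex_body (mavg A B).
Proof.
move=> [cA [vA [a0 Aa0]]] [cB [vB [b0 Bb0]]]; split; last split.
- have -> : mavg A B = [set (fun p : V * V => 2^-1 *: (p.1 + p.2)) x | x in A `*` B].
    apply/funext => x; apply/propext; split.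
    + by move=> [s [a Aa [b Bb <-]] <-]; exists (a, b).
    + by move=> [[a b] [/= Aa Bb] <-]; exists (a + b) => //; exists a => //; exists b.
  apply: continuous_compact; last exact: compact_setX.
  apply: continuous_subspaceT => p.
  have -> : (fun p : V * V => 2^-1 *: (p.1 + p.2)) =
    (fun x : V => 2^-1 *: x) \o (fun p : V * V => p.1 + p.2) by [].
  apply: continuous_comp; first exact: add_continuous.
  exact: scaler_continuous.
- move=> x y t [s [a Aa [b Bb <-]] <-] [s' [a' Aa' [b' Bb' <-]] <-] t01.
  exists (((1 - t) *: a + t *: a') + ((1 - t) *: b + t *: b')); last by vec.
  by exists ((1 - t) *: a + t *: a'); [exact: vA | exists ((1 - t) *: b + t *: b') => //; exact: vB].
- by exists (2^-1 *: (a0 + b0)); exists (a0 + b0) => //; exists a0 => //; exists b0.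
Qed.

Lemma var_lemma (A : set V) a b m : is_convex A -> A a ->
  (forall a', A a' -> sq (m - 2^-1 *: (a + b)) <= sq (m - 2^-1 *: (a' + b))) ->
  forall a', A a' -> dot (a' - a) (m - 2^-1 *: (a + b)) <= 0.
Proof.
move=> vA Aa hmin a' Aa'.
rewrite leNgt; apply/negP => kpos.
move: kpos; set w := m - 2^-1 *: (a + b); set k := dot (a' - a) w => kpos.
have D0 := sq_ge0 (a' - a); move: D0; set D := sq (a' - a) => D0.
have Dk : 0 < D + k + 1 by lra.
pose t := k / (D + k + 1).
have tE : t * (D + k + 1) = k by rewrite /t mulfVK // gt_eqF.
have t0 : 0 < t by rewrite /t divr_gt0.
have t1 : t <= 1 by nra.
have Hc : A ((1 - t) *: a + t *: a') by apply: vA => //; apply/andP; split; lra.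
have := hmin _ Hc.
have -> : m - 2^-1 *: ((1 - t) *: a + t *: a' + b) = w - (t / 2) *: (a' - a) by rewrite /w; vecf.
rewrite -/w (sqB w) sqZ dotZr (dotC w) -/k -/D => h.
nra.
Qed.

Lemma Sn_mavg (A B : set V) : Sn A -> Sn B -> Sn (mavg A B).
Proof.
move=> [bA [CA EA]] [bB [CB EB]].
have bM := mavg_body bA bB; split => //.
exists [set c | mavg A B `<=` eball c 1].
apply/funext => m; apply/propext; split.
  by move=> Mm c Cc; exact: Cc _ Mm.
move=> Hm; apply: contrapT => nMm.
have [cM [_ neM]] := bM.
have cont : {within mavg A B, continuous (fun p => sq (m - p))}.
  apply: continuous_subspaceT => p0.
  suff H : forall s : seq 'I_n,
      {for p0, continuous (fun p : V => \sum_(i <- s) (m - p) ord0 i * (m - p) ord0 i)}.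
    exact: H.
  elim => [|i s IH].
    have -> : (fun p : V => \sum_(i <- [::]) (m - p) ord0 i * (m - p) ord0 i) = fun=> 0.
      by apply/funext => p; rewrite big_nil.
    exact: cst_continuous.
  have -> : (fun p : V => \sum_(j <- i :: s) (m - p) ord0 j * (m - p) ord0 j) =
     ((fun p : V => m ord0 i - p ord0 i) \* (fun p : V => m ord0 i - p ord0 i)) +
     (fun p : V => \sum_(j <- s) (m - p) ord0 j * (m - p) ord0 j).
    by apply/funext => p; rewrite big_cons !mxE.
  apply: continuousD => //.
  have ci : {for p0, continuous (fun p : V => m ord0 i - p ord0 i)}.
    have -> : (fun p : V => m ord0 i - p ord0 i) = (fun=> m ord0 i) - (fun p : V => p ord0 i).
      by apply/funext.
    apply: continuousB; first exact: cst_continuous.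
    exact: coord_continuous.
  exact: continuousM.
have [p Mp pmin] := compact_EVT_min neM cM cont.
move: Mp; rewrite in_setE => Mp.
have pminE : forall q, mavg A B q -> sq (m - p) <= sq (m - q).
  by move=> q Mq; apply: pmin; rewrite in_setE.
move: (Mp) => [s [a Aa [b Bb sE]] pE].
subst s.
have w0 : 0 < sq (m - p).
  rewrite lt_def sq_ge0 andbT; apply/eqP => /sq_eq0 /eqP; rewrite subr_eq0 => /eqP mp.
  by apply: nMm; rewrite mp.
have varA : forall a', A a' -> dot (a' - a) (m - p) <= 0.
  rewrite -pE; apply: var_lemma => //; first exact: bA.2.1.
  move=> a' Aa'; rewrite pE; apply: pminE.
  by exists (a' + b) => //; exists a' => //; exists b.
have varB : forall b', B b' -> dot (b' - b) (m - p) <= 0.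
  have pE' : 2^-1 *: (b + a) = p by rewrite addrC.
  rewrite -pE'; apply: var_lemma => //; first exact: bB.2.1.
  move=> b' Bb'; rewrite pE'; apply: pminE.
  by exists (a + b') => //; [exists a => //; exists b' | rewrite addrC].
move: w0 varA varB; set w := m - p => w0 varA varB.
set e := enorm w.
have e0 : 0 < e by rewrite /e enormE sqrtr_gt0.
have eE : e ^+ 2 = sq w by rewrite /e enorm_sq.
pose u := e^-1 *: w.
have u1 : sq u = 1 by rewrite /u sqZ -eE exprVn mulVf // expf_neq0 // gt_eqF.
have hA : forall y, A y -> enorm (y - (a - u)) <= 1.
  move=> y Ay; rewrite enorm_le // expr1n; apply: (slide EA Aa Ay u1) => k Ak.
  by rewrite dotZr pmulr_rle0 ?invr_gt0 //; exact: varA.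
have hB : forall y, B y -> enorm (y - (b - u)) <= 1.
  move=> y By; rewrite enorm_le // expr1n; apply: (slide EB Bb By u1) => k Bk.
  by rewrite dotZr pmulr_rle0 ?invr_gt0 //; exact: varB.
have := Hm (p - u).
have Cc : mavg A B `<=` eball (p - u) 1.
  move=> x [s' [a' Aa' [b' Bb' <-]] <-]; rewrite /eball /=.
  have -> : 2^-1 *: (a' + b') - (p - u) = 2^-1 *: ((a' - (a - u)) + (b' - (b - u))).
    by rewrite -pE; apply/rowP => i; rewrite !mxE; move: (e^-1 * _) => k; field.
  rewrite enormZ ger0_norm; last lra.
  have := enormD (a' - (a - u)) (b' - (b - u)).
  have := hA _ Aa'; have := hB _ Bb'; lra.
move=> /(_ Cc); rewrite /eball /=.
have -> : m - (p - u) = (1 + e^-1) *: w by rewrite /u /w; vec.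
rewrite enormZ -/e ger0_norm; last by rewrite addr_ge0 // invr_ge0 ltW.
rewrite mulrDl mul1r mulVf ?gt_eqF //; lra.
Qed.

Lemma mid_dist (A B : set V) : convex_body A -> convex_body B ->
  hdist A (mavg A B) = hdist A B / 2 /\ hdist B (mavg A B) = hdist A B / 2.
Proof.
move=> bA bB.
have bM := mavg_body bA bB.
have h1 : 2 * hdist A (mavg A B) <= hdist A B.
  apply: lb_le_inf; first exact: HS_ne.
  move=> l hl; have := hdist_le (HS_mid bA.2.1 hl); lra.
have h2 : 2 * hdist B (mavg A B) <= hdist A B.
  rewrite (hdist_sym A B) mavgC.
  apply: lb_le_inf; first exact: HS_ne.
  move=> l hl; have := hdist_le (HS_mid bB.2.1 hl); lra.
have ht := hdist_tri (HS_ne bA bM) (HS_ne bM bB).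
rewrite (hdist_sym (mavg A B) B) in ht.
lra.
Qed.

End Mid.

Theorem lemma4 (R : realType) (n : nat) (T : set 'rV[R]_n -> set 'rV[R]_n)
  (K0 K1 : set 'rV[R]_n) :
  Sn_bij_isometry T -> Sn_cute K0 K1 ->
  Sn_cute (T K0) (T K1) /\ T (mavg K0 K1) = mavg (T K0) (T K1).
Proof.
move=> [TS [Tinj [Tsurj Tiso]]] HC.
move: HC; rewrite /Sn_cute /= => -[S0 [S1 [SM [h0 [h1 uniq]]]]].
have SA := TS _ S0; have SB := TS _ S1.
have dE : hdist (T K0) (T K1) = hdist K0 K1 := Tiso _ _ S0 S1.
have SM' := Sn_mavg SA SB.
have [m0 m1] := mid_dist SA.1 SB.1.
have [N [SN TN]] := Tsurj _ SM'.
have NE : N = mavg K0 K1.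
  apply: uniq => //.
  - by rewrite -(Tiso _ _ S0 SN) TN m0 dE.
  - by rewrite -(Tiso _ _ S1 SN) TN m1 dE.
have TM : T (mavg K0 K1) = mavg (T K0) (T K1) by rewrite -NE.
split => //.
split => //; split => //; split => //.
split; first by rewrite m0.
split; first by rewrite m1.
move=> M' SM'' hA hB.
have [N' [SN' TN']] := Tsurj _ SM''.
have E : N' = mavg K0 K1.
  apply: uniq => //.
  - by rewrite -(Tiso _ _ S0 SN') TN' hA dE.
  - by rewrite -(Tiso _ _ S1 SN') TN' hB dE.
by rewrite -TN' E TM.
Qed.
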